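(* Let $(X,d_X)$ be a finite metric space and let $\mathcal{C}(X)$ and $\mathcal{D}(X)$ be two partitions of $X$ such that every set in $\mathcal{C}(X)$ and every set in $\mathcal{D}(X)$ has diameter at most $\delta$. Fix one of the following inter-cluster distances $d_{\mathcal{C}}$ on pairs of nonempty subsets $A,B\subseteq X$: $\max(A,B)=\max_{x\in A,y\in B} d_X(x,y)$, $\ \min(A,B)=\min_{x\in A,y\in B} d_X(x,y)$, or $\ \operatorname{avg}(A,B)=\frac{1}{|A||B|}\sum_{x\in A}\sum_{y\in B} d_X(x,y)$. Let $G_{\mathcal{C}(X)}$ and $G_{\mathcal{D}(X)}$ be the ClusterGraphs of $\mathcal{C}(X)$ and $\mathcal{D}(X)$ with respect to $d_{\mathcal{C}}$. Then for every vertex $u$ of $G_{\mathcal{C}(X)}$ (corresponding to the cluster $C_u\in\mathcal{C}(X)$), the image $\operatorname{im}(u)$ of $u$ in $G_{\mathcal{D}(X)}$ spans a clique in $G_{\mathcal{D}(X)}$, and the diameter of this clique, i.e. $\max\{ d_{\mathcal{C}}(D_i,D_j) : D_i, D_j \in \operatorname{im}(u),\ D_i\neq D_j\}$, is at most $3\delta$ when $d_{\mathcal{C}}$ is the maximum or the average distance, and at most $\delta$ when $d_{\mathcal{C}}$ is the minimum distance.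
   Context: A partition of $X$ is a collection of pairwise disjoint subsets (clusters) whose union is $X$; the diameter of a subset $S$ is $\max_{x,y\in S}d_X(x,y)$. The ClusterGraph of a partition $\mathcal{P}(X)$ with respect to an inter-cluster distance $d_{\mathcal{C}}$ is the complete graph whose vertices are the clusters of $\mathcal{P}(X)$, with the edge between clusters $P_i,P_j$ weighted by $d_{\mathcal{C}}(P_i,P_j)$. The image of a vertex $u$ of $G_{\mathcal{C}(X)}$ (cluster $C_u$) in $G_{\mathcal{D}(X)}$ is the set of vertices of $G_{\mathcal{D}(X)}$ whose clusters $D_j\in\mathcal{D}(X)$ satisfy $D_j\cap C_u\neq\emptyset$. The diameter of a set of vertices in such a weighted graph is the greatest edge weight between any two of its vertices. *)

(* Defs.v *)
From mathcomp Require Import all_boot all_order all_algebra.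
Set Implicit Arguments. Unset Strict Implicit. Unset Printing Implicit Defensive.
Import Order.TTheory GRing.Theory Num.Theory.
Local Open Scope ring_scope.

Section Defs.
Variables (R : realFieldType) (T : finType).

Definition is_metric (d : T -> T -> R) : Prop :=
  [/\ forall x y, 0 <= d x y,
      forall x y, d x y = 0 <-> x = y,
      forall x y, d x y = d y x
    & forall x y z, d x z <= d x y + d y z].

Definition diam (d : T -> T -> R) (S : {set T}) : R :=
  \big[Num.max/0]_(x in S) \big[Num.max/0]_(y in S) d x y.

Inductive linkage := Lmax | Lmin | Lavg.

Definition dmaxC (d : T -> T -> R) (A B : {set T}) : R :=
  \big[Num.max/0]_(x in A) \big[Num.max/0]_(y in B) d x y.

(* minimum over the (nonempty) pairs; the neutral element dmaxC d A B is
   an upper bound of all terms, so for nonempty A, B this is exactly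
   min_{x in A, y in B} d x y. *)
Definition dminC (d : T -> T -> R) (A B : {set T}) : R :=
  \big[Num.min/dmaxC d A B]_(x in A) \big[Num.min/dmaxC d A B]_(y in B) d x y.

Definition davgC (d : T -> T -> R) (A B : {set T}) : R :=
  (\sum_(x in A) \sum_(y in B) d x y) / (#|A| * #|B|)%:R.

Definition interdist (l : linkage) (d : T -> T -> R) : {set T} -> {set T} -> R :=
  match l with Lmax => dmaxC d | Lmin => dminC d | Lavg => davgC d end.

Record wgraph := WGraph {
  gvert : {set {set T}};
  gweight : {set T} -> {set T} -> R }.

Definition gadj (G : wgraph) (u v : {set T}) : bool :=
  [&& u \in gvert G, v \in gvert G & u != v].

Definition ClusterGraph (l : linkage) (d : T -> T -> R) (P : {set {set T}}) : wgraph :=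
  WGraph P (interdist l d).

Definition is_clique (G : wgraph) (S : {set {set T}}) : Prop :=
  S \subset gvert G /\ forall u v, u \in S -> v \in S -> u != v -> gadj G u v.

Definition im_cluster (PD : {set {set T}}) (Cu : {set T}) : {set {set T}} :=
  [set D in PD | D :&: Cu != set0].

Definition gdiam (G : wgraph) (S : {set {set T}}) : R :=
  \big[Num.max/0]_(Di in S) \big[Num.max/0]_(Dj in S | Di != Dj) gweight G Di Dj.

End Defs.

(* Main.v *)
Require Import Defs.
From mathcomp Require Import all_boot all_order all_algebra.
Import Order.TTheory GRing.Theory Num.Theory.
Local Open Scope ring_scope.

Lemma diam_le (R : realFieldType) (T : finType) (d : T -> T -> R) (S : {set T}) x y :
  x \in S -> y \in S -> d x y <= diam d S.
Proof.
move=> xS yS; rewrite /diam.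
apply: le_trans (le_bigmax_cond _ _ xS).
exact: (le_bigmax_cond _ _ yS).
Qed.

Lemma diam_ge0 (R : realFieldType) (T : finType) (d : T -> T -> R) (S : {set T}) :
  0 <= diam d S.
Proof. exact: bigmax_ge_id. Qed.

Theorem proposition2 (R : realFieldType) (T : finType) (d : T -> T -> R)
  (hd : is_metric d) (PC PD : {set {set T}}) (delta : R)
  (hPC : partition PC [set: T]) (hPD : partition PD [set: T])
  (hdC : forall C, C \in PC -> diam d C <= delta)
  (hdD : forall D, D \in PD -> diam d D <= delta)
  (l : linkage) (Cu : {set T}) (hu : Cu \in PC) :
  is_clique (ClusterGraph l d PD) (im_cluster PD Cu) /\
  gdiam (ClusterGraph l d PD) (im_cluster PD Cu)
    <= (if l is Lmin then delta else 3 * delta).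
Proof.
case: hd => d0 _ dsym dtri.
have delta0 : 0 <= delta := le_trans (diam_ge0 _ _ d Cu) (hdC _ hu).
split.
  split; first by apply/subsetP => D; rewrite inE => /andP[].
  move=> u v; rewrite !inE => /andP[uP _] /andP[vP _] uv.
  by rewrite /gadj /= uP vP uv.
have bnd0 : 0 <= (if l is Lmin then delta else 3 * delta).
  by case: l => //; rewrite mulr_ge0.
apply: bigmax_le => // A; rewrite inE => /andP[AP /set0Pn[a]].
rewrite inE => /andP[aA aC].
apply: bigmax_le => // B; rewrite inE => /andP[/andP[BP /set0Pn[b]]].
rewrite inE => /andP[bB bC] _.
have tri : forall x y, x \in A -> y \in B -> d x y <= 3 * delta.
  move=> x y xA yB.
  apply: le_trans (dtri x a y) _.
  apply: le_trans (lerD (le_refl _) (dtri a b y)) _.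
  have h1 : d x a <= delta := le_trans (diam_le _ _ d _ _ _ xA aA) (hdD _ AP).
  have h2 : d a b <= delta := le_trans (diam_le _ _ d _ _ _ aC bC) (hdC _ hu).
  have h3 : d b y <= delta := le_trans (diam_le _ _ d _ _ _ bB yB) (hdD _ BP).
  have -> : 3 * delta = delta + (delta + delta) by rewrite -[3]/(1 + 1 + 1)%:R !mulrDl mul1r addrA.
  by rewrite lerD // lerD.
case: l bnd0 => /= bnd0.
- apply: bigmax_le => // x xA; apply: bigmax_le => // y yB; exact: tri.
- apply: le_trans (bigmin_le_cond _ _ aA) _.
  apply: le_trans (bigmin_le_cond _ _ bB) _.
  exact: le_trans (diam_le _ _ d _ _ _ aC bC) (hdC _ hu).
- rewrite /davgC.
  have cpos : 0 < (#|A| * #|B|)%:R :> R.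
    by rewrite ltr0n muln_gt0; apply/andP; split; apply/card_gt0P; eauto.
  rewrite ler_pdivrMr //.
  apply: (@le_trans _ _ (\sum_(x in A) \sum_(y in B) 3 * delta)).
    by apply: ler_sum => x xA; apply: ler_sum => y yB; exact: tri.
  rewrite !sumr_const -mulrnA mulr_natr mulnC. done.
Qed.
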